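(* Let $A\in\mathbb R^{d\times d}$ and suppose there is $\omega_*\in\mathbb R^d$, $\omega_*\ne0$, with $A\omega_*=A^{\mathsf T}\omega_*=0$. For any $c\in\mathbb R$ define $\tilde{\mathcal E}(\omega):=c-\langle\omega_*,\omega\rangle$ and $$\tilde{\mathbb J}(\omega):=\frac{1}{2|\omega_*|^2}\Big(\omega_*\otimes(A\omega)-(A\omega)\otimes\omega_*\Big).$$ Then the linear ODE $\dot\omega=\frac12A\omega$ admits the Hamiltonian system $(\mathbb R^d,\tilde{\mathcal E},\tilde{\mathbb J})$: $\tilde{\mathbb J}(\omega)$ is skew-symmetric for every $\omega$, the bracket $\{\mathcal G_1,\mathcal G_2\}(\omega):=\langle D\mathcal G_1(\omega),\tilde{\mathbb J}(\omega)D\mathcal G_2(\omega)\rangle$ satisfies the Jacobi identity for all $C^2$ functions $\mathcal G_1,\mathcal G_2,\mathcal G_3:\mathbb R^d\to\mathbb R$, and $\frac12A\omega=\tilde{\mathbb J}(\omega)D\tilde{\mathcal E}(\omega)$ for all $\omega\in\mathbb R^d$.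
   Context: $\langle\cdot,\cdot\rangle$ is the Euclidean inner product, $|\cdot|$ the Euclidean norm, $D$ the gradient, and $a\otimes b$ the outer product, i.e. the matrix with $(a\otimes b)v=\langle b,v\rangle a$. *)

(* Defs.v *)
From HB Require Import structures.
From mathcomp Require Import all_boot all_order all_algebra.
From mathcomp Require Import all_classical all_reals all_analysis.
Set Implicit Arguments. Unset Strict Implicit. Unset Printing Implicit Defensive.
Import Order.TTheory GRing.Theory Num.Theory.
Import numFieldNormedType.Exports.
Local Open Scope ring_scope.

Section Defs.
Variables (R : realType) (d : nat).
Notation vec := 'cV[R]_d.

Definition inner (a b : vec) : R := \sum_(i < d) a i 0 * b i 0.

Definition sqnorm (a : vec) : R := inner a a.

Definition outer (a b : vec) : 'M[R]_d := a *m b^T.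

Definition ebase (i : 'I_d) : vec := delta_mx i 0.

Definition partial (i : 'I_d) (f : vec -> R) (x : vec) : R := derive f x (ebase i).

Definition grad (f : vec -> R) (x : vec) : vec := \col_(i < d) partial i f x.

Definition C2 (f : vec -> R) : Prop :=
  (forall i x, derivable f x (ebase i)) /\
  (forall i, continuous (partial i f)) /\
  (forall i j x, derivable (partial i f) x (ebase j)) /\
  (forall i j, continuous (partial j (partial i f))).

Definition pbracket (J : vec -> 'M[R]_d) (G1 G2 : vec -> R) (w : vec) : R :=
  inner (grad G1 w) (J w *m grad G2 w).

Definition Etilde (c : R) (ws : vec) (w : vec) : R := c - inner ws w.

Definition Jtilde (A : 'M[R]_d) (ws : vec) (w : vec) : 'M[R]_d :=
  (2 * sqnorm ws)^-1 *: (outer ws (A *m w) - outer (A *m w) ws).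

End Defs.

(* Main.v *)
Require Import Defs.
From HB Require Import structures.
From mathcomp Require Import all_boot all_order all_algebra.
From mathcomp Require Import all_classical all_reals all_analysis.
From mathcomp Require Import ring lra.
Set Implicit Arguments. Unset Strict Implicit. Unset Printing Implicit Defensive.
Import Order.TTheory GRing.Theory Num.Theory.
Import numFieldNormedType.Exports.
Local Open Scope classical_set_scope.
Local Open Scope ring_scope.

Section Clairaut.
Variables (R : realType) (V : normedModType R).

Lemma is_derive_line (f : V -> R) (a u : V) (s : R) :
  derivable f (s *: u + a) u ->
  is_derive s 1 (fun t : R => f (t *: u + a)) ('D_u f (s *: u + a)).
Proof.
move=> df.
pose g := fun t : R => f (t *: u + a).
have E : (fun h : R => h^-1 *: ((g \o shift s) (h *: (1:R)) - g s)) =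
   (fun h : R => h^-1 *: ((f \o shift (s *: u + a)) (h *: u) - f (s *: u + a))).
  apply/funext => h /=; rewrite /g /= [h *: 1]mulr1 scalerDl addrA //.
apply: DeriveDef; first by rewrite /derivable E.
by rewrite /derive E.
Qed.


Lemma near_ball (g : V -> R) x (e : R) : 0 < e -> g @ x --> g x ->
  exists2 r : R, 0 < r & forall y, `|x - y| < r -> `|g x - g y| < e.
Proof.
move=> e0 /cvgrPdist_lt /(_ e e0) H.
have := H; rewrite nearE => /nbhs_ballP [r r0 Hr]; exists r => // y xy.
by apply: Hr; rewrite -ball_normE /=.
Qed.

Lemma mixed_diff (f : V -> R) (x u v : V) (h : R) : 0 <= h ->
  (forall y, derivable f y u) -> (forall y, derivable ('D_u f) y v) ->
  exists s t, [/\ 0 <= s <= h, 0 <= t <= h &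
   f (h *: u + (h *: v + x)) - f (h *: u + x) - f (h *: v + x) + f x
     = h * h * 'D_v ('D_u f) (t *: v + (s *: u + x))].
Proof.
move=> h0 du dv.
pose phi := fun s : R => f (s *: u + (h *: v + x)) - f (s *: u + x).
pose dphi := fun s : R => 'D_u f (s *: u + (h *: v + x)) - 'D_u f (s *: u + x).
have dphiP (s : R) : is_derive s (1:R) phi (dphi s).
  have H := is_deriveB (is_derive_line (du _)) (is_derive_line (du _)).
  exact: H.
have [s sin Es] : exists2 s, s \in `[0, h]%R & phi h - phi 0 = dphi s * (h - 0).
  apply: (MVT_segment h0).
  apply: derivable_within_continuous => z _.
  by have [] := dphiP z.
pose psi := fun t : R => 'D_u f (t *: v + (s *: u + x)).
have psiP (t : R) : is_derive t (1:R) psi ('D_v ('D_u f) (t *: v + (s *: u + x))).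
  exact: is_derive_line.
have [t tin Et] : exists2 t, t \in `[0, h]%R &
    psi h - psi 0 = 'D_v ('D_u f) (t *: v + (s *: u + x)) * (h - 0).
  apply: (MVT_segment h0).
  apply: derivable_within_continuous => z _.
  by have [] := psiP z.
exists s, t; split.
- by move: sin; rewrite in_itv.
- by move: tin; rewrite in_itv.
have E1 : dphi s = psi h - psi 0.
  by rewrite /dphi /psi scale0r add0r addrCA.
move: Es; rewrite E1 Et /phi !scale0r !add0r subr0 => E2.
set D := 'D_v _ _ in E2 *.
have -> : h * h * D = D * h * h by ring.
by rewrite -E2; ring.
Qed.


Lemma clairaut (f : V -> R) (u v x : V) :
  (forall y, derivable f y u) -> (forall y, derivable f y v) ->
  (forall y, derivable ('D_u f) y v) -> (forall y, derivable ('D_v f) y u) ->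
  continuous ('D_v ('D_u f)) -> continuous ('D_u ('D_v f)) ->
  'D_v ('D_u f) x = 'D_u ('D_v f) x.
Proof.
move=> du dv duv dvu c1 c2.
apply/eqP/negPn/negP => neq.
pose e : R := `|'D_v ('D_u f) x - 'D_u ('D_v f) x|.
have e0 : 0 < e by rewrite normr_gt0 subr_eq0.
have e20 : 0 < e / 2 by rewrite divr_gt0.
have [r1 r10 H1] := near_ball e20 (c1 x).
have [r2 r20 H2] := near_ball e20 (c2 x).
pose r := Num.min r1 r2.
have r0 : 0 < r by rewrite lt_min r10 r20.
pose M := `|u| + `|v| + 1.
have M0 : 0 < M by rewrite /M ltr_wpDl // addr_ge0.
pose h := r / (2 * M).
have h0 : 0 < h by rewrite /h divr_gt0 // mulr_gt0.
have hM : h * M < r.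
  have -> : h * M = r / 2 by rewrite /h; field; rewrite gt_eqF.
  by rewrite ltr_pdivrMr // ltr_pMr // ltr1n.
have rr1 : r <= r1 by rewrite /r ge_min lexx.
have rr2 : r <= r2 by rewrite /r ge_min lexx orbT.
have close (s t : R) (a b : V) : 0 <= s <= h -> 0 <= t <= h ->
    `|x - (t *: b + (s *: a + x))| <= h * (`|a| + `|b|).
  move=> /andP[s0 sh] /andP[t0 th].
  have -> : t *: b + (s *: a + x) = x + (t *: b + s *: a) by rewrite addrA addrC.
  rewrite opprD addrA subrr add0r normrN.
  rewrite (le_trans (ler_normD _ _)) // !normrZ !ger0_norm // mulrDr addrC.
  by rewrite lerD // ler_wpM2r.
have [s1 [t1 [hs1 ht1 E1]]] := mixed_diff x (ltW h0) du duv.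
have [s2 [t2 [hs2 ht2 E2]]] := mixed_diff x (ltW h0) dv dvu.
have hh : h * h != 0 by rewrite mulf_neq0 // gt_eqF.
pose y1 := t1 *: v + (s1 *: u + x).
pose y2 := t2 *: u + (s2 *: v + x).
have Eg : 'D_v ('D_u f) y1 = 'D_u ('D_v f) y2.
  apply: (mulfI hh); apply: (etrans (esym E1)); apply: (etrans _ E2).
  have -> : h *: v + (h *: u + x) = h *: u + (h *: v + x) by rewrite addrCA.
  ring.
have Mle : `|u| + `|v| <= M by rewrite /M lerDl.
have Mle2 : `|v| + `|u| <= M by rewrite addrC.
have L1 : `|'D_v ('D_u f) x - 'D_v ('D_u f) y1| < e / 2.
  apply: H1; apply: (le_lt_trans (close _ _ _ _ hs1 ht1)).
  apply: (lt_le_trans _ rr1); apply: (le_lt_trans _ hM).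
  by rewrite ler_pM2l.
have L2 : `|'D_u ('D_v f) y2 - 'D_u ('D_v f) x| < e / 2.
  rewrite distrC; apply: H2; apply: (le_lt_trans (close _ _ _ _ hs2 ht2)).
  apply: (lt_le_trans _ rr2); apply: (le_lt_trans _ hM).
  by rewrite ler_pM2l.
have T : e <= `|'D_v ('D_u f) x - 'D_v ('D_u f) y1| + `|'D_u ('D_v f) y2 - 'D_u ('D_v f) x|.
  have -> : e = `|('D_v ('D_u f) x - 'D_v ('D_u f) y1) + ('D_u ('D_v f) y2 - 'D_u ('D_v f) x)|.
    by rewrite /e Eg addrA subrK.
  exact: ler_normD.
have : e < e / 2 + e / 2 := le_lt_trans T (ltrD L1 L2).
by rewrite -splitr ltxx.
Qed.

End Clairaut.

Section Main.
Variables (R : realType) (d : nat).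
Notation vec := 'cV[R]_d.

Lemma inner_mx (a b : vec) : inner a b = (a^T *m b) 0 0.
Proof. by rewrite /inner !mxE; apply: eq_bigr => i _; rewrite !mxE. Qed.

Lemma innerC (a b : vec) : inner a b = inner b a.
Proof. by apply: eq_bigr => i _; rewrite mulrC. Qed.

Lemma innerDr (a b c : vec) : inner a (b + c) = inner a b + inner a c.
Proof. by rewrite !inner_mx mulmxDr mxE. Qed.

Lemma innerZr (a b : vec) (k : R) : inner a (k *: b) = k * inner a b.
Proof. by rewrite !inner_mx -scalemxAr mxE. Qed.

Lemma innerNr (a b : vec) : inner a (- b) = - inner a b.
Proof. by rewrite -scaleN1r innerZr mulN1r. Qed.

Lemma innerBr (a b c : vec) : inner a (b - c) = inner a b - inner a c.
Proof. by rewrite innerDr innerNr. Qed.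

Lemma outer_mul (p q r : vec) : outer p q *m r = inner q r *: p.
Proof.
apply/matrixP => i j; rewrite [j]ord1 !mxE /inner big_distrl /=.
apply: eq_bigr => m _; rewrite !mxE big_ord1 !mxE; ring.
Qed.

Lemma inner_mulmx (M : 'M[R]_d) (a b : vec) : inner (M *m a) b = inner a (M^T *m b).
Proof. by rewrite !inner_mx trmx_mul mulmxA. Qed.

Lemma inner_ebase (a : vec) i : inner a (ebase R i) = a i 0.
Proof. by rewrite inner_mx /ebase -colE !mxE. Qed.

Lemma sqnorm_neq0 (a : vec) : a != 0 -> sqnorm a != 0.
Proof.
move=> a0; apply/eqP => H; move/eqP: a0; apply; apply/matrixP => i j.
rewrite [j]ord1 mxE.
have := @psumr_eq0P _ _ xpredT (fun i : 'I_d => a i 0 * a i 0).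
move=> /(_ (fun i _ => (eq_ind _ (fun z => 0 <= z) (sqr_ge0 (a i 0)) _ (expr2 _)))) /(_ H) /(_ i isT) /eqP.
by rewrite mulf_eq0 orbb => /eqP.
Qed.

Lemma cvg_hinv (c : R) : (fun h : R => h^-1 * (h * c)) @ 0^' --> c.
Proof.
apply/cvgrPdist_lt => e e0; near=> h.
rewrite mulrA mulVf ?mul1r ?subrr ?normr0 //.
near: h; exact: nbhs_dnbhs_neq.
Unshelve. all: by end_near.
Qed.

Lemma is_derive_affine (f : vec -> R) (x v : vec) (c : R) :
  (forall h : R, f (h *: v + x) = f x + h * c) -> is_derive x v f c.
Proof.
move=> Hf.
have E : (fun h : R => h^-1 *: ((f \o shift x) (h *: v) - f x)) =
         (fun h : R => h^-1 * (h * c)).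
  by apply/funext => h /=; rewrite Hf addrAC subrr add0r.
constructor; first by rewrite /derivable E; apply/cvg_ex; exists c; exact: cvg_hinv.
by rewrite /derive E; apply: cvg_lim; [|exact: cvg_hinv].
Qed.

End Main.

Section Main2.
Variables (R : realType) (d : nat) (A : 'M[R]_d) (ws : 'cV[R]_d).
Notation vec := 'cV[R]_d.

Lemma J_skew w : (Jtilde A ws w)^T = - Jtilde A ws w.
Proof.
by rewrite /Jtilde linearZ /= linearB /= /outer !trmx_mul !trmxK -scalerN opprB.
Qed.

Lemma grad_E c w : grad (Etilde c ws) w = - ws.
Proof.
apply/matrixP => i j; rewrite [j]ord1 !mxE /partial.
have H : is_derive w (ebase R i) (Etilde c ws) (- ws i 0).
  apply: is_derive_affine => h.
  by rewrite /Etilde innerDr innerZr inner_ebase; ring.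
by case: H => _ ->.
Qed.

Lemma energy_eq c w : ws != 0 -> A^T *m ws = 0 ->
  2^-1 *: (A *m w) = Jtilde A ws w *m grad (Etilde c ws) w.
Proof.
move=> hws hAT.
rewrite grad_E /Jtilde -scalemxAl mulmxBl !outer_mul innerNr inner_mulmx hAT.
rewrite innerNr (_ : inner w 0 = 0); last by rewrite /inner big1 // => i _; rewrite mxE mulr0.
rewrite oppr0 scale0r sub0r scaleNr opprK scalerA; congr (_ *: _).
rewrite -/(sqnorm ws); field; exact: sqnorm_neq0.
Qed.

Definition Xf (F : vec -> R) w := inner (grad F w) ws.
Definition Yf (F : vec -> R) w := inner (grad F w) (A *m w).
Definition kk := (2 * sqnorm ws)^-1.

Lemma pb_eq (F G : vec -> R) (w : vec) :
  pbracket (Jtilde A ws) F G w = kk * (Xf F w * Yf G w - Yf F w * Xf G w).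
Proof.
rewrite /pbracket /Jtilde -scalemxAl mulmxBl !outer_mul innerZr innerBr !innerZr.
rewrite (innerC (A *m w)) (innerC ws (grad G w)) /Xf /Yf /kk; ring.
Qed.


Section DerivTools.
Implicit Types (f g : vec -> R) (x v : vec).

Lemma isdM f g x v df dg : is_derive x v f df -> is_derive x v g dg ->
  is_derive x v (fun y => f y * g y) (f x * dg + g x * df).
Proof. move=> Hf Hg; exact: is_deriveM. Qed.

Lemma isdB f g x v df dg : is_derive x v f df -> is_derive x v g dg ->
  is_derive x v (fun y => f y - g y) (df - dg).
Proof. move=> Hf Hg; exact: is_deriveB. Qed.

Lemma isdZ f x v df (k : R) : is_derive x v f df ->
  is_derive x v (fun y => k * f y) (k * df).
Proof. move=> Hf; exact: is_deriveZ. Qed.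

Lemma isdSum n (h : 'I_n -> vec -> R) dh x v :
  (forall i, is_derive x v (h i) (dh i)) ->
  is_derive x v (fun y => \sum_(i < n) h i y) (\sum_(i < n) dh i).
Proof.
move=> H; have := is_derive_sum H; rewrite fct_sumE; exact.
Qed.

Lemma isdC (k : R) x v : is_derive x v (fun _ : vec => k) 0.
Proof. exact: is_derive_cst. Qed.

End DerivTools.

Lemma isd_coord (l j : 'I_d) w :
  is_derive w (ebase R j) (fun y : vec => (A *m y) l 0) (A l j).
Proof.
apply: is_derive_affine => h.
by rewrite mulmxDr -scalemxAr /ebase -colE !mxE addrC mulrC.
Qed.

Lemma isd_partial (F : vec -> R) (i j : 'I_d) (w : vec) : C2 F ->
  is_derive w (ebase R j) (partial i F) (partial j (partial i F) w).
Proof. by case=> _ [_ [d2 _]]; apply: derivableP (d2 i j w). Qed.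

Lemma sym2 (F : vec -> R) (w : vec) (i j : 'I_d) : C2 F -> partial j (partial i F) w = partial i (partial j F) w.
Proof.
case=> d1 [c1 [d2 c2]].
have := @clairaut R _ F (ebase R i) (ebase R j) w.
move=> /(_ (d1 i) (d1 j)).
move=> /(_ (d2 i j) (d2 j i)).
move=> /(_ (c2 i j) (c2 j i)).
by [].
Qed.

Definition dXf (F : vec -> R) (w : vec) (j : 'I_d) := \sum_(i < d) ws i 0 * partial j (partial i F) w.
Definition dYf (F : vec -> R) (w : vec) (j : 'I_d) := \sum_(i < d)
  (partial i F w * A i j + (A *m w) i 0 * partial j (partial i F) w).

Lemma XfE (F : vec -> R) : Xf F = fun y => \sum_(i < d) partial i F y * ws i 0.
Proof. by apply/funext => y; rewrite /Xf /inner; apply: eq_bigr => i _; rewrite mxE. Qed.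

Lemma YfE (F : vec -> R) : Yf F = fun y => \sum_(i < d) partial i F y * (A *m y) i 0.
Proof. by apply/funext => y; rewrite /Yf /inner; apply: eq_bigr => i _; rewrite mxE. Qed.

Lemma isd_X (F : vec -> R) (w : vec) (j : 'I_d) : C2 F -> is_derive w (ebase R j) (Xf F) (dXf F w j).
Proof.
move=> CF; rewrite XfE.
apply: is_derive_eq; first exact: (isdSum (fun i => isdM (isd_partial i j w CF) (isdC _ _ _))).
by apply: eq_bigr => i _; rewrite mulr0 add0r.
Qed.

Lemma isd_Y (F : vec -> R) (w : vec) (j : 'I_d) : C2 F -> is_derive w (ebase R j) (Yf F) (dYf F w j).
Proof.
move=> CF; rewrite YfE.
apply: is_derive_eq; first exact: (isdSum (fun i => isdM (isd_partial i j w CF) (isd_coord i j w))).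
by [].
Qed.


Lemma partial_pb (F G : vec -> R) (w : vec) (j : 'I_d) : C2 F -> C2 G ->
  partial j (pbracket (Jtilde A ws) F G) w =
  kk * ((Xf F w * dYf G w j + Yf G w * dXf F w j)
      - (Yf F w * dXf G w j + Xf G w * dYf F w j)).
Proof.
move=> CF CG.
have -> : pbracket (Jtilde A ws) F G =
    (fun y => kk * (Xf F y * Yf G y - Yf F y * Xf G y)).
  by apply/funext => y; exact: pb_eq.
have H : is_derive w (ebase R j)
    (fun y => kk * (Xf F y * Yf G y - Yf F y * Xf G y))
    (kk * ((Xf F w * dYf G w j + Yf G w * dXf F w j)
      - (Yf F w * dXf G w j + Xf G w * dYf F w j))).
  exact: (isdZ kk (isdB (isdM (isd_X w j CF) (isd_Y w j CG))
                        (isdM (isd_Y w j CF) (isd_X w j CG)))).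
by rewrite /partial; case: H => _ ->.
Qed.

Lemma Xf_sum (P : vec -> R) (w : vec) : Xf P w = \sum_(j < d) partial j P w * ws j 0.
Proof. by rewrite /Xf /inner; apply: eq_bigr => i _; rewrite mxE. Qed.

Lemma Yf_sum (P : vec -> R) (w : vec) :
  Yf P w = \sum_(j < d) partial j P w * (A *m w) j 0.
Proof. by rewrite /Yf /inner; apply: eq_bigr => i _; rewrite mxE. Qed.

Definition XX (F : vec -> R) (w : vec) := \sum_(j < d) dXf F w j * ws j 0.
Definition XY (F : vec -> R) (w : vec) := \sum_(j < d) dYf F w j * ws j 0.
Definition YX (F : vec -> R) (w : vec) := \sum_(j < d) dXf F w j * (A *m w) j 0.
Definition YY (F : vec -> R) (w : vec) := \sum_(j < d) dYf F w j * (A *m w) j 0.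

Lemma sum_comb (k p q r s : R) (U V W Z c : 'I_d -> R) :
  \sum_(j < d) (k * ((p * U j + q * V j) - (r * W j + s * Z j))) * c j =
  k * ((p * \sum_(j < d) U j * c j + q * \sum_(j < d) V j * c j)
     - (r * \sum_(j < d) W j * c j + s * \sum_(j < d) Z j * c j)).
Proof.
rewrite (eq_bigr (fun j => k * p * (U j * c j) + k * q * (V j * c j)
   - k * r * (W j * c j) - k * s * (Z j * c j))); last by move=> j _; ring.
rewrite !sumrB big_split /= -!mulr_sumr; ring.
Qed.

Lemma X_pb (F G : vec -> R) (w : vec) : C2 F -> C2 G ->
  Xf (pbracket (Jtilde A ws) F G) w =
  kk * ((Xf F w * XY G w + Yf G w * XX F w) - (Yf F w * XX G w + Xf G w * XY F w)).
Proof.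
move=> CF CG; rewrite Xf_sum.
under eq_bigr => j _ do rewrite (partial_pb w j CF CG).
exact: sum_comb.
Qed.

Lemma Y_pb (F G : vec -> R) (w : vec) : C2 F -> C2 G ->
  Yf (pbracket (Jtilde A ws) F G) w =
  kk * ((Xf F w * YY G w + Yf G w * YX F w) - (Yf F w * YX G w + Xf G w * YY F w)).
Proof.
move=> CF CG; rewrite Yf_sum.
under eq_bigr => j _ do rewrite (partial_pb w j CF CG).
exact: sum_comb.
Qed.

Lemma XY_YX (F : vec -> R) (w : vec) : C2 F -> A *m ws = 0 -> XY F w = YX F w.
Proof.
move=> CF hA.
have E1 j : dYf F w j * ws j 0 =
    \sum_(i < d) partial i F w * (A i j * ws j 0)
  + \sum_(i < d) (A *m w) i 0 * ws j 0 * partial j (partial i F) w.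
  by rewrite /dYf big_distrl -big_split /=; apply: eq_bigr => i _; ring.
rewrite /XY (eq_bigr _ (fun j _ => E1 j)) big_split /=.
have -> : \sum_(j < d) \sum_(i < d) partial i F w * (A i j * ws j 0) = 0.
  rewrite exchange_big /=; apply: big1 => i _; rewrite -mulr_sumr.
  have : (A *m ws) i 0 = 0 by rewrite hA mxE.
  by rewrite mxE => ->; rewrite mulr0.
rewrite add0r /YX /dXf.
rewrite [RHS](eq_bigr (fun j => \sum_(i < d) ws i 0 * partial j (partial i F) w * (A *m w) j 0)); last first.
  by move=> j _; rewrite big_distrl.
rewrite [RHS]exchange_big /=.
apply: eq_bigr => i _; apply: eq_bigr => j _.
rewrite (sym2 w i j CF); ring.
Qed.

Lemma jac_alg (k x1 y1 a1 b1 c1 x2 y2 a2 b2 c2 x3 y3 a3 b3 c3 : R) :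
 k*(x1 * (k*((x2*c3 + y3*b2) - (y2*b3 + x3*c2))) - y1 * (k*((x2*b3 + y3*a2) - (y2*a3 + x3*b2))))
 + k*(x2 * (k*((x3*c1 + y1*b3) - (y3*b1 + x1*c3))) - y2 * (k*((x3*b1 + y1*a3) - (y3*a1 + x1*b3))))
 + k*(x3 * (k*((x1*c2 + y2*b1) - (y1*b2 + x2*c1))) - y3 * (k*((x1*b2 + y2*a1) - (y1*a2 + x2*b1)))) = 0.
Proof. ring. Qed.

Lemma jacobi (G1 G2 G3 : vec -> R) (w : vec) : C2 G1 -> C2 G2 -> C2 G3 ->
  A *m ws = 0 ->
  pbracket (Jtilde A ws) G1 (pbracket (Jtilde A ws) G2 G3) w
     + pbracket (Jtilde A ws) G2 (pbracket (Jtilde A ws) G3 G1) w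
     + pbracket (Jtilde A ws) G3 (pbracket (Jtilde A ws) G1 G2) w = 0.
Proof.
move=> C1 C2' C3 hA.
rewrite !pb_eq (X_pb w C2' C3) (Y_pb w C2' C3) (X_pb w C3 C1) (Y_pb w C3 C1).
rewrite (X_pb w C1 C2') (Y_pb w C1 C2').
rewrite (XY_YX w C1 hA) (XY_YX w C2' hA) (XY_YX w C3 hA).
exact: jac_alg.
Qed.

End Main2.

Theorem theoremA2 (R : realType) (d : nat) (A : 'M[R]_d) (ws : 'cV[R]_d)
  (hws : ws != 0) (hA : A *m ws = 0) (hAT : A^T *m ws = 0) (c : R) :
  (forall w : 'cV[R]_d, (Jtilde A ws w)^T = - Jtilde A ws w) /\
  (forall G1 G2 G3 : 'cV[R]_d -> R, C2 G1 -> C2 G2 -> C2 G3 ->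
     forall w : 'cV[R]_d,
       pbracket (Jtilde A ws) G1 (pbracket (Jtilde A ws) G2 G3) w
     + pbracket (Jtilde A ws) G2 (pbracket (Jtilde A ws) G3 G1) w
     + pbracket (Jtilde A ws) G3 (pbracket (Jtilde A ws) G1 G2) w = 0) /\
  (forall w : 'cV[R]_d,
     2^-1 *: (A *m w) = Jtilde A ws w *m grad (Etilde c ws) w).
Proof.
split; first exact: J_skew.
split; first by move=> G1 G2 G3 C1 C2' C3 w; exact: jacobi.
by move=> w; exact: energy_eq.
Qed.
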